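(* Let $n\ge2$, $\nu\in\mathcal{F}_{C_n}$, $1\le k\le n$ and $\alpha$ a formula. Then: (1) if $\nu(\alpha)=T_n$ then $\nu(\alpha^k)=T_n$; (2) if $\nu(\alpha)=t^n_i$ for some $0\le i\le k-2$ then $\nu(\alpha^k)=T_n$; (3) if $\nu(\alpha)=t^n_{k-1}$ then $\nu(\alpha^k)=F_n$; (4) if $\nu(\alpha)=t^n_i$ for some $k\le i\le n-1$ then $\nu(\alpha^k)=t^n_{i-k}$; (5) if $\nu(\alpha)=F_n$ then $\nu(\alpha^k)=T_n$.
   Context: $\Sigma$ has unary $\neg$ and binary $\wedge,\vee,\to$; formulas over a denumerable set of variables; $\alpha^0=\alpha$, $\alpha^{k+1}=\neg(\alpha^k\wedge\neg\alpha^k)$. Fix $n\ge2$. $B_n=\{z\in\{0,1\}^{n+1}:(z_1\wedge\dots\wedge z_k)\vee z_{k+1}=1\text{ for all }1\le k\le n\}$; its elements are $T_n=(1,0,1,\dots,1)$, $t^n_i$ ($0\le i\le n-2$) the tuple with $z_1=z_2=1$ and a single $0$ at coordinate $i+3$, $t^n_{n-1}=(1,\dots,1)$, and $F_n=(0,1,\dots,1)$. $D_n=\{z\in B_n:z_1=1\}$, $Boo_n=\{T_n,F_n\}$, $I_n=B_n\setminus Boo_n$. The multialgebra $\mathcal{A}_{C_n}$ on $B_n$: $\tilde\neg z=\{w\in B_n:w_1=z_2,\ w_2\le z_1\}$; for $\#\in\{\wedge,\vee,\to\}$, $z\tilde\#w=\{u\in Boo_n:u_1=z_1\#w_1\}$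 if $z,w\in Boo_n$, and $\{u\in B_n:u_1=z_1\#w_1\}$ otherwise ($\#$ on $\{0,1\}$ Boolean). A valuation is a map $\nu$ from formulas to $B_n$ with $\nu(\neg\alpha)\in\tilde\neg\nu(\alpha)$ and $\nu(\alpha\#\beta)\in\nu(\alpha)\tilde\#\nu(\beta)$. $\mathcal{F}_{C_n}$ is the set of valuations such that for every $\alpha$: $\nu(\alpha)=t^n_0$ implies $\nu(\alpha\wedge\neg\alpha)=T_n$; and for $1\le k\le n-1$, $\nu(\alpha)=t^n_k$ implies $\nu(\alpha\wedge\neg\alpha)\in I_n$ and $\nu(\alpha^1)=t^n_{k-1}$. *)

(* Defs.v *)
From mathcomp Require Import all_boot.
Set Implicit Arguments. Unset Strict Implicit. Unset Printing Implicit Defensive.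

Inductive form : Type :=
| Var of nat
| Neg of form
| And of form & form
| Or of form & form
| Imp of form & form.

Fixpoint cpow (a : form) (k : nat) : form :=
  match k with
  | 0 => a
  | k'.+1 => Neg (And (cpow a k') (Neg (cpow a k')))
  end.

(* Snapshots: elements of {0,1}^(n+1) are sequences of booleans of size n+1.
   coord z k is the k-th coordinate z_k, 1-indexed as in the paper. *)
Definition coord (z : seq bool) (k : nat) : bool := nth false z k.-1.

Definition inB (n : nat) (z : seq bool) : bool :=
  (size z == n.+1) &&
  [forall k : 'I_n.+1, (1 <= k) ==>
     ((all (fun j => coord z j) (iota 1 k)) || coord z k.+1)].

(* Distinguished elements; the sequence index j corresponds to coordinate j+1 *)
Definition Tn (n : nat) : seq bool := mkseq (fun j => j != 1) n.+1.
Definition Fn (n : nat) : seq bool := mkseq (fun j => j != 0) n.+1.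
(* t^n_i: z_1 = z_2 = 1 and a single 0 at coordinate i+3 (for i <= n-2);
   t^n_(n-1) = (1,...,1) *)
Definition tn (n i : nat) : seq bool := mkseq (fun j => j != i.+2) n.+1.

Definition inBoo (n : nat) (z : seq bool) : bool := (z == Tn n) || (z == Fn n).
Definition inI (n : nat) (z : seq bool) : bool := inB n z && ~~ inBoo n z.

(* multioperations: membership w \in neg~ z, u \in z #~ w *)
Definition negm (n : nat) (z w : seq bool) : bool :=
  [&& inB n w, coord w 1 == coord z 2 & coord w 2 <= coord z 1].

Definition binm (n : nat) (op : bool -> bool -> bool) (z w u : seq bool) : bool :=
  if inBoo n z && inBoo n w then inBoo n u && (coord u 1 == op (coord z 1) (coord w 1))
  else inB n u && (coord u 1 == op (coord z 1) (coord w 1)).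

Definition valuation (n : nat) (v : form -> seq bool) : Prop :=
  (forall a, inB n (v a)) /\
  (forall a, negm n (v a) (v (Neg a))) /\
  (forall a b, binm n andb (v a) (v b) (v (And a b))) /\
  (forall a b, binm n orb (v a) (v b) (v (Or a b))) /\
  (forall a b, binm n implb (v a) (v b) (v (Imp a b))).

Definition inFCn (n : nat) (v : form -> seq bool) : Prop :=
  valuation n v /\
  (forall a, v a = tn n 0 -> v (And a (Neg a)) = Tn n) /\
  (forall a k, 1 <= k <= n.-1 -> v a = tn n k ->
      inI n (v (And a (Neg a))) /\ v (cpow a 1) = tn n k.-1).

(* Main.v *)
Require Import Defs.
From mathcomp Require Import all_boot zify.

Lemma inB_step n w k : inB n w -> 1 <= k <= n ->
  ~~ all (fun j => coord w j) (iota 1 k) -> coord w k.+1.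
Proof.
move=> /andP[_ /forallP H] /andP[k1 kn] Hn.
have kl : k < n.+1 by [].
move: (H (Ordinal kl)) => /= /implyP /(_ k1).
by rewrite (negbTE Hn).
Qed.

Lemma inB_F n w : inB n w -> coord w 1 = false -> w = Fn n.
Proof.
move=> Hw H1.
have Hs : size w = n.+1 by case/andP: Hw => /eqP.
apply: (@eq_from_nth _ false); first by rewrite size_mkseq.
move=> j; rewrite Hs => jl; rewrite nth_mkseq //.
case: j jl => [|j] jl /=; first by exact: H1.
have := @inB_step n w j.+1 Hw; rewrite /coord /=.
apply; first by rewrite /= -ltnS.
by move: H1; rewrite /coord /= => ->.
Qed.

Lemma inB_T n w : inB n w -> coord w 1 = true -> coord w 2 = false -> w = Tn n.
Proof.
move=> Hw H1 H2.
have Hs : size w = n.+1 by case/andP: Hw => /eqP.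
apply: (@eq_from_nth _ false); first by rewrite size_mkseq.
move=> j; rewrite Hs => jl; rewrite nth_mkseq //.
case: j jl => [|[|j]] jl /=; first by exact: H1.
  exact: H2.
have := @inB_step n w j.+2 Hw; rewrite /coord /=.
apply; first by rewrite /= -ltnS.
by move: H1 H2; rewrite /coord /= => -> ->.
Qed.

Lemma cpow_add a p q : cpow (cpow a p) q = cpow a (p + q).
Proof. by elim: q => [|q IH] /=; rewrite ?addn0 ?addnS //= IH. Qed.

Set Default Proof Using "All".
Section S.
Variables (n : nat) (hn : 2 <= n) (v : form -> seq bool) (hv : inFCn n v).

Lemma TnB : inB n (Tn n).
Proof.
case: n hn => [|[|m]] // _.
apply/andP; split; first by rewrite size_mkseq.
apply/forallP => -[[|[|k]] kl] //.
apply/implyP => _; apply/orP; right.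
by rewrite /coord nth_mkseq.
Qed.

Lemma FnB : inB n (Fn n).
Proof.
case: n hn => [|[|m]] // _.
apply/andP; split; first by rewrite size_mkseq.
apply/forallP => -[[|k] kl] //.
apply/implyP => _; apply/orP; right.
by rewrite /coord nth_mkseq.
Qed.

Lemma cT1 : coord (Tn n) 1 = true. Proof. by case: n. Qed.
Lemma cT2 : coord (Tn n) 2 = false. Proof. by case: n hn => [|[|m]]. Qed.
Lemma cF1 : coord (Fn n) 1 = false. Proof. by case: n. Qed.
Lemma cF2 : coord (Fn n) 2 = true. Proof. by case: n hn => [|[|m]]. Qed.

Lemma booT : inBoo n (Tn n). Proof. by rewrite /inBoo eqxx. Qed.
Lemma booF : inBoo n (Fn n). Proof. by rewrite /inBoo eqxx orbT. Qed.

Lemma negT a : v a = Tn n -> v (Neg a) = Fn n.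
Proof.
case: hv => [[HB [HN _]] _] Ha.
move: (HN a); rewrite Ha => /and3P[Hb /eqP H1 _].
by apply: inB_F => //; rewrite H1 cT2.
Qed.

Lemma negF a : v a = Fn n -> v (Neg a) = Tn n.
Proof.
case: hv => [[HB [HN _]] _] Ha.
move: (HN a); rewrite Ha => /and3P[Hb /eqP H1 H2].
apply: inB_T => //; first by rewrite H1 cF2.
by move: H2; rewrite cF1; case: (coord _ 2).
Qed.

Lemma andBoo a b : inBoo n (v a) -> inBoo n (v b) ->
  (coord (v a) 1 && coord (v b) 1) = false -> v (And a b) = Fn n.
Proof.
case: hv => [[HB [HN [HA _]]] _] Ha Hb Hc.
move: (HA a b); rewrite /binm Ha Hb Hc /= => /andP[/orP[]/eqP -> //].
Qed.

Lemma sT a : v a = Tn n -> v (cpow a 1) = Tn n.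
Proof.
move=> Ha /=; apply: negF.
have Hn := @negT a Ha.
by apply: andBoo; rewrite ?Ha ?Hn ?booT ?booF ?cF1 ?andbF.
Qed.

Lemma sF a : v a = Fn n -> v (cpow a 1) = Tn n.
Proof.
move=> Ha /=; apply: negF.
have Hn := @negF a Ha.
by apply: andBoo; rewrite ?Ha ?Hn ?booT ?booF ?cF1.
Qed.

Lemma s0 a : v a = tn n 0 -> v (cpow a 1) = Fn n.
Proof. case: hv => [_ [H0 _]] Ha /=; apply: negT; exact: H0. Qed.

Lemma si a i : 1 <= i <= n.-1 -> v a = tn n i -> v (cpow a 1) = tn n i.-1.
Proof. case: hv => [_ [_ H]] Hi Ha; exact: (proj2 (H a i Hi Ha)). Qed.


Lemma LT m a : v a = Tn n -> v (cpow a m) = Tn n.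
Proof.
elim: m a => [|m IH] a Ha //.
by rewrite -addn1 -cpow_add; apply: sT; apply: IH.
Qed.

Lemma Lt m : forall i a, m <= i <= n.-1 -> v a = tn n i -> v (cpow a m) = tn n (i - m).
Proof.
elim: m => [|m IH] i a Hi Ha; first by rewrite subn0.
case/andP: Hi => H1 H2.
have -> : i - m.+1 = (i - m).-1 by rewrite subnS.
rewrite -addn1 -cpow_add.
apply: si; last by apply: IH => //; rewrite H2 ltnW.
by rewrite subn_gt0 H1 /= (leq_trans (leq_subr _ _) H2).
Qed.

End S.

Theorem mainTheorem10 (n : nat) (hn : 2 <= n) (v : form -> seq bool)
  (hv : inFCn n v) (k : nat) (hk : 1 <= k <= n) (a : form) :
  (v a = Tn n -> v (cpow a k) = Tn n) /\
  (forall i, i.+2 <= k -> v a = tn n i -> v (cpow a k) = Tn n) /\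
  (v a = tn n k.-1 -> v (cpow a k) = Fn n) /\
  (forall i, k <= i <= n.-1 -> v a = tn n i -> v (cpow a k) = tn n (i - k)) /\
  (v a = Fn n -> v (cpow a k) = Tn n).
Proof.
case/andP: hk => k1 kn.
split; first exact: LT.
split.
  move=> i ik Ha.
  have -> : k = i + 1 + 1 + (k - i.+2) by rewrite !addn1 subnKC.
  rewrite -cpow_add; apply: (@LT _ hn _ hv).
  rewrite -cpow_add; apply: (@sF _ hn _ hv).
  rewrite -cpow_add; apply: (@s0 _ hn _ hv).
  rewrite -(subnn i); apply: (@Lt _ hn _ hv) => //.
  apply/andP; split => //; lia.
split.
  move=> Ha.
  have -> : k = k.-1 + 1 by rewrite addn1 prednK.
  rewrite -cpow_add; apply: (@s0 _ hn _ hv).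
  rewrite -(subnn k.-1); apply: (@Lt _ hn _ hv) => //.
  apply/andP; split => //; lia.
split; first by move=> i Hi Ha; apply: (@Lt _ hn _ hv).
move=> Ha.
have -> : k = 1 + k.-1 by rewrite add1n prednK.
rewrite -cpow_add; apply: (@LT _ hn _ hv); exact: (@sF _ hn _ hv).
Qed.
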